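(* There exists a function $f(n,w)$ such that for all positive integers $n,w$ the following holds. If $G$ is a connected graph and $(T,\mathcal{Y})$ is a lean tree-decomposition of $G$ of width at most $w$ such that $T$ contains a path $P$ of length at least $f(n,w)$, then $P$ has interior vertices $t_1,t_2,\ldots,t_n$, occurring along $P$ in this order, such that: (i) for some positive integer $s\leq w+1$, $|Y_{t_i}|=s$ for all $i\in[n]$, and $|Y_t|\geq s$ for every vertex $t$ of $P$ between $t_1$ and $t_n$; and (ii) there is a set $U\subseteq V(G)$ with $Y_{t_i}\cap Y_{t_j}=U$ for all distinct $i,j\in[n]$.
   Context: All graphs are finite and loopless but may have parallel edges; $[n]=\{1,\dots,n\}$. A tree-decomposition of $G$ is a pair $(T,\mathcal{Y})$ where $T$ is a tree and $\mathcal{Y}=\{Y_t\}_{t\in V(T)}$ is a family of subsets of $V(G)$ (bags) such that (W1) $\bigcup_{t} Y_t=V(G)$ and every edge of $G$ has both ends in some $Y_t$; and (W2) if $t'$ lies on the path of $T$ between $t$ and $t''$ then $Y_t\cap Y_{t''}\subseteq Y_{t'}$. Its width is $\max_t(|Y_t|-1)$. It is lean if additionally: (W3) for every two vertices $t,t'$ of $T$ and every positive integer $k$, either $G$ has $k$ vertex-disjoint paths between $Y_t$ and $Y_{t'}$, or some vertex $t''$ on the path of $T$ between $t$ and $t'$ has $|Y_{t''}|<k$; (W4) distinct vertices $t\ne t'$ of $T$ have $Y_t\neq Y_{t'}$; (W5) if $t_0\in V(T)$ and $B$ is a component of $T-t_0$, then $\bigcup_{t\in V(B)}Y_t\setminus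 Y_{t_0}\neq\emptyset$. *)

(* Defs.v *)
From mathcomp Require Import all_boot.
Set Implicit Arguments. Unset Strict Implicit. Unset Printing Implicit Defensive.

(* A (finite, loopless, possibly with parallel edges) graph: vertex type V,
   edge type E, and [ends e] = the two ends of edge e. *)
Definition loopless (V E : finType) (ends : E -> V * V) : Prop :=
  forall e, (ends e).1 != (ends e).2.

Definition madj (V E : finType) (ends : E -> V * V) : rel V :=
  fun x y => [exists e, ends e == (x, y)] || [exists e, ends e == (y, x)].

Definition gpath (V : finType) (adj : rel V) (p : seq V) : bool :=
  if p is x :: s then path adj x s && uniq p else false.

Definition gconnected (V : finType) (adj : rel V) : Prop :=
  forall x y, connect adj x y.

Definition is_tree (I : finType) (eT : rel I) : Prop :=
  [/\ irreflexive eT, symmetric eT,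
      (exists t : I, True),
      gconnected eT &
      (* no cycles *)
      forall (x : I) (s : seq I),
        path eT x s -> uniq (x :: s) -> 2 <= size s -> ~~ eT (last x s) x].

(* t' lies on the path of T between t and t'' *)
Definition on_tpath (I : finType) (eT : rel I) (t t'' t' : I) : Prop :=
  exists s : seq I,
    [/\ path eT t s, uniq (t :: s), last t s = t'' & t' \in t :: s].

Definition comp_minus (I : finType) (eT : rel I) (t0 : I) (B : {set I}) : Prop :=
  exists t1 : I, t1 != t0 /\
    B = [set t | (t != t0) &&
           connect [rel x y | [&& eT x y, x != t0 & y != t0]] t1 t].

Definition AB_path (V : finType) (adj : rel V) (A B : {set V}) (p : seq V) : bool :=
  if p is x :: s then [&& gpath adj p, x \in A & last x s \in B] else false.

Definition disjoint_paths (V : finType) (adj : rel V) (A B : {set V}) (k : nat) : Prop :=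
  exists ps : seq (seq V),
    [/\ size ps = k, all (AB_path adj A B) ps & uniq (flatten ps)].

Definition tree_decomp (V I : finType) (adj : rel V) (eT : rel I) (Y : I -> {set V}) : Prop :=
  [/\ is_tree eT,
      \bigcup_(t : I) Y t = [set: V],
      (forall x y, adj x y -> exists t, (x \in Y t) && (y \in Y t)) &
      (* W2 *)
      forall t t' t'', on_tpath eT t t'' t' -> Y t :&: Y t'' \subset Y t'].

Definition lean_tree_decomp (V I : finType) (adj : rel V) (eT : rel I) (Y : I -> {set V}) : Prop :=
  [/\ tree_decomp adj eT Y,
      (forall (t t' : I) (k : nat), 0 < k ->
         disjoint_paths adj (Y t) (Y t') k \/
         exists t'', on_tpath eT t t' t'' /\ #|Y t''| < k),
      (* W4 *)
      (forall t t', t != t' -> Y t != Y t') &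
      forall (t0 : I) (B : {set I}), comp_minus eT t0 B ->
         (\bigcup_(t in B) Y t) :\: Y t0 != set0].

Definition width_le (V I : finType) (Y : I -> {set V}) (w : nat) : Prop :=
  forall t, #|Y t| <= w.+1.

(* Main.v *)
Require Import Defs.
From mathcomp Require Import all_boot zify.
Set Implicit Arguments. Unset Strict Implicit. Unset Printing Implicit Defensive.

Lemma tpath_sub (I : finType) (eT : rel I) (P : seq I) (x : I) :
  sorted eT P -> uniq P -> forall p q r, p <= q -> q <= r -> r < size P ->
  on_tpath eT (nth x P p) (nth x P r) (nth x P q).
Proof.
elim: P => [|y t IH] //= Hs Hu p q r Hpq Hqr Hr.
case: p Hpq => [|p] Hpq.
  rewrite [nth x _ 0]/=.
  have E : y :: take r t = take r.+1 (y :: t) by [].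
  exists (take r t); split.
  - by apply: take_path.
  - by rewrite E take_uniq.
  - have Hrt : (if r < size t then r else size t) = r by case: ltnP => ?; lia.
    rewrite (last_nth y) size_take Hrt E nth_take //.
    by apply: set_nth_default.
  - rewrite E -(@nth_take r.+1 _ x q) ?ltnS //.
    by apply: mem_nth; rewrite size_take /=; case: (ltnP r.+1 (size t).+1) => ?; lia.
case: q Hqr Hpq => [|q] // Hqr Hpq; case: r Hqr Hr => [|r] // Hqr Hr.
move/andP: Hu => [_ Hu].
apply: IH => //.
by case: t Hs {Hr Hu} => //= z t /andP[].
Qed.
Lemma lemA (g : nat -> nat) (M : nat) : 0 < M -> forall k a len m,
  (forall j, a <= j < a + len -> m <= g j <= m + k) -> M ^ k.+1 <= len ->
  exists e : nat -> nat, exists s a' len',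
  [/\ a <= a', a' + len' <= a + len, (forall j, a' <= j < a' + len' -> s <= g j),
     (forall i, i < M -> a' <= e i < a' + len' /\ g (e i) = s) &
     (forall i j, i < j < M -> e i < e j)].
Proof.
move=> M0; elim=> [|k IH] a len m Hg Hlen.
- exists (fun i => a + i), m, a, len; split => //.
  + by move=> j /Hg /andP[].
  + move=> i iM; split; first by rewrite expn1 in Hlen; lia.
    have /Hg : a <= a + i < a + len by rewrite expn1 in Hlen; lia.
    by rewrite addn0 => /andP[? ?]; apply/eqP; rewrite eqn_leq; apply/andP.
  + by move=> i j; lia.
set L := M ^ k.+1.
have L0 : 0 < L by rewrite expn_gt0 M0.
have HML : M * L <= len by rewrite -expnS.
pose P b := has (fun i => g (a + b * L + i) == m) (iota 0 L).
case: (boolP (all P (iota 0 M))) => [Hall | /allPn [b]].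
- pose q b := find (fun i => g (a + b * L + i) == m) (iota 0 L).
  have Hq : forall c, c < M -> q c < L /\ g (a + c * L + q c) = m.
    move=> c cM; have : P c by apply: (allP Hall); rewrite mem_iota; lia.
    rewrite /P => H; split; first by rewrite has_find size_iota in H.
    have := nth_find 0 H; rewrite nth_iota; last by move: H; rewrite has_find size_iota.
    by rewrite add0n => /eqP.
  have HbM : forall c, c < M -> c * L + L <= len.
    move=> c cM; apply: leq_trans HML; rewrite addnC -mulSn leq_mul2r ?cM ?bM orbT //.
  exists (fun b0 : nat => a + b0 * L + q b0); exists m, a, len; split => //.
  + by move=> j /Hg /andP[].
  + move=> i iM; have [H1 H2] := Hq i iM; split => //.
    have := HbM i iM; lia.
  + move=> i j /andP[ij jM].
    have [H1 _] := Hq i (ltn_trans ij jM).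
    have : i.+1 * L <= j * L by rewrite leq_mul2r ij orbT.
    rewrite mulSn; lia.
- rewrite mem_iota add0n => /andP[_ bM] /hasPn Hb.
  have HbM : b * L + L <= len.
    apply: leq_trans HML; rewrite addnC -mulSn leq_mul2r ?cM ?bM orbT //.
  have Hg' : forall j, a + b * L <= j < a + b * L + L -> m.+1 <= g j <= m.+1 + k.
    move=> j Hj.
    have : (j - (a + b * L)) \in iota 0 L by rewrite mem_iota; lia.
    move/Hb; have -> : a + b * L + (j - (a + b * L)) = j by lia.
    have /Hg : a <= j < a + len by lia.
    move=> /andP[H1 H2] H3; apply/andP; split; last by lia.
    by rewrite ltn_neqAle H1 andbT eq_sym.
  have [e [s [a' [len' [H1 H2 H3 H4 H5]]]]] := IH _ _ _ Hg' (leqnn _).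
  exists e, s, a', len'; split => //; lia.
Qed.
Lemma lemB (h : nat -> nat -> nat) (M : nat) : 0 < M ->
  (forall u u' v' v, u <= u' -> u' < v' -> v' <= v -> h u v <= h u' v') ->
  forall k a len m,
  (forall u v, a <= u -> u < v -> v < a + len -> m <= h u v <= m + k) -> M ^ k.+1 <= len ->
  exists e : nat -> nat,
  [/\ (forall i, i < M -> a <= e i < a + len),
      (forall i j, i < j < M -> e i < e j) &
      exists e0, forall i j, i < j < M -> h (e i) (e j) = e0].
Proof.
move=> M0 Hmono; elim=> [|k IH] a len m Hg Hlen.
- exists (fun i => a + i); split.
  + by move=> i iM; rewrite expn1 in Hlen; lia.
  + by move=> i j; lia.
  + exists m => i j ijM.
    have /Hg : a <= a + i by lia.
    move=> /(_ (a + j)) H; have {H} /andP[H1 H2] : m <= h (a + i) (a + j) <= m + 0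
      by apply: H; rewrite expn1 in Hlen; lia.
    by apply/eqP; rewrite eqn_leq H1; lia.
set L := M ^ k.+1.
have L0 : 0 < L by rewrite expn_gt0 M0.
have HML : M * L <= len by rewrite -expnS.
have HbM : forall c, c < M -> c * L + L <= len.
  move=> c cM; apply: leq_trans HML; rewrite addnC -mulSn leq_mul2r cM orbT //.
pose P b := h (a + b * L) (a + b.+1 * L) == m.
case: (boolP (all P (iota 0 M.-1))) => [Hall | /allPn [b]].
- exists (fun b => a + b * L); split.
  + move=> i iM; have := HbM i iM; lia.
  + move=> i j /andP[ij jM]; rewrite ltn_add2l ltn_mul2r L0 ij //.
  + exists m => i j /andP[ij jM].
    have Pi : P i by apply: (allP Hall); rewrite mem_iota; lia.
    apply/eqP; rewrite eqn_leq; apply/andP; split.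
      rewrite -(eqP Pi); apply: Hmono => //.
        by rewrite ltn_add2l ltn_mul2r L0 ltnSn.
      by rewrite leq_add2l leq_mul2r ij orbT.
    have := HbM j jM; have : i * L < j * L by rewrite ltn_mul2r L0 ij.
    move=> H1 H2; have /andP[] // : m <= h (a + i * L) (a + j * L) <= m + k.+1.
    apply: Hg; lia.
- rewrite mem_iota add0n => /andP[_ bM] Hb.
  have bM' : b.+1 < M by lia.
  have Hbb := HbM b.+1 bM'.
  have Hg' : forall u v, a + b * L <= u -> u < v -> v < a + b * L + L.+1 ->
      m.+1 <= h u v <= m.+1 + k.
    move=> u v H1 H2 H3.
    have /andP[H4 H5] : m <= h u v <= m + k.+1 by apply: Hg => //; rewrite mulSn in Hbb; lia.
    have /Hg : a <= a + b * L by lia.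
    move=> /(_ (a + b.+1 * L)) H; have {H} /andP[H6 H7] :
      m <= h (a + b * L) (a + b.+1 * L) <= m + k.+1
      by apply: H; rewrite ?mulSn; lia.
    have H8 : h (a + b * L) (a + b.+1 * L) <= h u v.
      apply: Hmono => //; rewrite mulSn; lia.
    have H9 : h (a + b * L) (a + b.+1 * L) != m by [].
    apply/andP; split; last by rewrite addSnnS.
    by apply: leq_trans H8; rewrite ltn_neqAle eq_sym H9 H6.
  have [e [H1 H2 H3]] := IH _ _ _ Hg' (leqW (leqnn _)).
  exists e; split => //.
  move=> i iM; have := H1 i iM; rewrite mulSn in Hbb; lia.
Qed.
Lemma lemC (V : finType) (C : nat -> {set V}) (N e0 : nat) :
  (forall i j k, i < j -> j < k -> k < N -> C i :&: C k \subset C j) ->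
  (forall i j, i < j -> j < N -> #|C i :&: C j| = e0) ->
  forall i j, i < j -> j < N -> C i :&: C j = C 0 :&: C N.-1.
Proof.
move=> Htri Hsz.
have E : forall i j k, i < j -> j < k -> k < N ->
    C i :&: C k = C i :&: C j /\ C i :&: C k = C j :&: C k.
  move=> i j k ij jk kN; have H := Htri i j k ij jk kN.
  split; apply/eqP; rewrite eqEcard !Hsz //; try lia; rewrite leqnn andbT.
    by rewrite subsetI subsetIl H.
  by rewrite subsetI subsetIr H.
move=> i j ij jN.
have -> : C i :&: C j = C i :&: C N.-1.
  case: (ltngtP j N.-1) => H; try lia.
    by have [-> _] := E i j N.-1 ij H ltac:(lia).
  by rewrite H.
case: i ij => [|i] ij //.
by have [_ <-] := E 0 i.+1 N.-1 (ltn0Sn _) ltac:(lia) ltac:(lia).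
Qed.

Theorem lemma5p4 :
  exists f : nat -> nat -> nat,
  forall (n w : nat), 0 < n -> 0 < w ->
  forall (V E I : finType) (ends : E -> V * V) (eT : rel I) (Y : I -> {set V}),
    loopless ends ->
    gconnected (madj ends) ->
    lean_tree_decomp (madj ends) eT Y ->
    width_le Y w ->
  forall (x : I) (s : seq I),
    path eT x s -> uniq (x :: s) -> f n w <= size s ->
  exists idx : nat -> nat,
    [/\ (forall i, i < n -> 0 < idx i /\ idx i < size s),
        (forall i j, i < j < n -> idx i < idx j),
        (exists2 sz : nat, 0 < sz <= w.+1 &
           (forall i, i < n -> #|Y (nth x (x :: s) (idx i))| = sz) /\
           (forall j, idx 0 <= j <= idx n.-1 -> sz <= #|Y (nth x (x :: s) j)|)) &
        exists U : {set V},
          forall i j, i < n -> j < n -> i != j ->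
            Y (nth x (x :: s) (idx i)) :&: Y (nth x (x :: s) (idx j)) = U].
Proof.
exists (fun n w => ((n.+1) ^ w.+2) ^ w.+2 + 1).
move=> n w n0 w0 V E I ends eT Y _ _ [[_ _ _ W2] _ W4 _] Hw x s Hp Hu Hf.
set NB := (n.+1) ^ w.+2.
have NB0 : 0 < NB by rewrite expn_gt0.
pose b j := Y (nth x (x :: s) j).
have Htri : forall p q r, p <= q -> q <= r -> r <= size s -> b p :&: b r \subset b q.
  move=> p q r pq qr rs; apply: W2; apply: tpath_sub => //.
have HNB : (n.+1) ^ (w.+1).+1 <= NB by [].
have Hlen : NB ^ (w.+1).+1 <= size s - 1.
  move: Hf; rewrite -/NB; set Z := NB ^ _; lia.
clearbody NB.
have [eA [s0 [a' [len' [HA1 HA2 HA3 HA4 HA5]]]]] :=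
  @lemA (fun j => #|b j|) NB NB0 w.+1 1 (size s - 1) 0
    (fun j _ => Hw (nth x (x :: s) j)) Hlen.
pose eA' i := eA (minn i NB.-1).
have eAE : forall i, i < NB -> eA' i = eA i.
  by move=> i iN; rewrite /eA'; congr eA; lia.
have eAr : forall i, 0 < eA' i < size s.
  move=> i; have [H _] := HA4 (minn i NB.-1) ltac:(lia); rewrite /eA'; lia.
have eAm : forall i j, i <= j -> eA' i <= eA' j.
  move=> i j ij; rewrite /eA'.
  case: (ltngtP (minn i NB.-1) (minn j NB.-1)) => H; try lia.
    by apply: ltnW; apply: HA5; apply/andP; split => //; lia.
  by rewrite H.
pose h u v := #|b (eA' u) :&: b (eA' v)|.
have Hmono : forall u u' v' v, u <= u' -> u' < v' -> v' <= v -> h u v <= h u' v'.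
  move=> u u' v' v H1 H2 H3; apply: subset_leq_card.
  have := eAr v; have := eAm _ _ H1; have := eAm _ _ (ltnW H2); have := eAm _ _ H3.
  move=> K1 K2 K3 K4.
  rewrite subsetI; apply/andP; split.
    apply: Htri; lia.
  apply: Htri; lia.
have [eB [HB1 HB2 [e0 HB3]]] :=
  @lemB h n.+1 (ltn0Sn _) Hmono w.+1 0 NB 0
    (fun u v _ _ _ => leq_trans (subset_leq_card (subsetIl _ _)) (Hw _)) HNB.
have eBr : forall i, i < n.+1 -> eB i < NB by move=> i /HB1.
exists (fun i => eA (eB i)); split.
- move=> i iN; have [H _] := HA4 (eB i) (eBr i ltac:(lia)); lia.
- move=> i j /andP[ij jn]; apply: HA5; apply/andP; split.
    by apply: HB2; lia.
  by apply: eBr; lia.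
- exists s0.
    apply/andP; split; last by have [_ <-] := HA4 (eB 0) (eBr 0 ltac:(lia)); apply: Hw.
    rewrite lt0n; apply/negP => /eqP s00.
    have [P1 Q1] := HA4 (eB 0) (eBr 0 ltac:(lia)).
    have [P2 Q2] := HA4 (eB n) (eBr n ltac:(lia)).
    have lt : eA (eB 0) < eA (eB n).
      by apply: HA5; rewrite HB2 ?eBr //; lia.
    have := W4 (nth x (x :: s) (eA (eB 0))) (nth x (x :: s) (eA (eB n))).
    rewrite nth_uniq //= ?ltnS; try lia.
    rewrite neq_ltn lt /= => /(_ isT).
    by move: Q1 Q2; rewrite /b s00 => /cards0_eq -> /cards0_eq ->; rewrite eqxx.
  split.
    by move=> i iN; have [_ ->] := HA4 (eB i) (eBr i ltac:(lia)).
  move=> j Hj; apply: HA3.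
  have [P1 _] := HA4 (eB 0) (eBr 0 ltac:(lia)).
  have [P2 _] := HA4 (eB n.-1) (eBr n.-1 ltac:(lia)).
  lia.
- pose C i := b (eA (eB i)).
  have HC := @lemC V C n.+1 e0.
  have Ht : forall i j k, i < j -> j < k -> k < n.+1 -> C i :&: C k \subset C j.
    move=> i j k ij jk kn.
    have L1 : eA (eB i) < eA (eB j) by apply: HA5; rewrite HB2 ?eBr //; lia.
    have L2 : eA (eB j) < eA (eB k) by apply: HA5; rewrite HB2 ?eBr //; lia.
    have [L3 _] := HA4 (eB k) (eBr k kn).
    apply: Htri; lia.
  have Hs : forall i j, i < j -> j < n.+1 -> #|C i :&: C j| = e0.
    move=> i j ij jn; rewrite -(HB3 i j) ?ij //.
    by rewrite /h !eAE ?eBr //; lia.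
  exists (C 0 :&: C n) => i j iN jN ij.
  case: (ltngtP i j) => H; last by rewrite H eqxx in ij.
    by apply: (HC Ht Hs) => //; lia.
  by rewrite setIC; apply: (HC Ht Hs) => //; lia.
Qed.
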